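(* Let $k$ be an algebraically closed field of characteristic $p>0$ and $n\ge1$. Let $\mathbb{E}_{\ge0}(n,k) = \coprod_{r\ge0}\mathrm{Hom}_{\mathrm{gr}}((\mathbb{Z}/p\mathbb{Z})^r,\mathrm{GL}(n,k))$ and let $\pi : \mathbb{E}_{\ge0}(n,k)\to\mathrm{Mat}(n,k[T])^E$ be defined as follows: the unique element $\rho_0$ with $r=0$ is sent to $I_n$; for $r\ge1$, an element $\rho\in\mathrm{Hom}_{\mathrm{gr}}((\mathbb{Z}/p\mathbb{Z})^r,\mathrm{GL}(n,k))$, written uniquely as $\rho = \rho_{N_1,\ldots,N_r}$ with $(N_1,\ldots,N_r)\in\mathcal{N}_r(n,k)$, is sent to $\prod_{i=1}^r \mathrm{Exp}(T^{p^{i-1}}N_i)$. Then $\pi$ is surjective.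
   Context: A matrix $A(T)\in\mathrm{Mat}(n,k[T])$ is an exponential matrix if $A(T)A(T') = A(T+T')$ in $\mathrm{Mat}(n,k[T,T'])$ and $A(0)=I_n$; $\mathrm{Mat}(n,k[T])^E$ is the set of exponential matrices. $\mathcal{N}_r(n,k)$ is the set of $(N_1,\ldots,N_r)\in\mathrm{Mat}(n,k)^r$ with $N_i^p=O_n$ and $N_iN_j=N_jN_i$ for all $i,j$, and $\rho_{N_1,\ldots,N_r}(a_1,\ldots,a_r) = \prod_{i=1}^r(I_n+N_i)^{a_i}$; every group homomorphism $(\mathbb{Z}/p\mathbb{Z})^r\to\mathrm{GL}(n,k)$ is of this form for a unique tuple. For a matrix $M$ over a commutative $k$-algebra with $M^p=O_n$, $\mathrm{Exp}(M) := \sum_{i=0}^{p-1}\frac{1}{i!}M^i$. *)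

(* Defs.v *)
From HB Require Import structures.
From mathcomp Require Import all_boot all_order all_algebra.
Set Implicit Arguments. Unset Strict Implicit. Unset Printing Implicit Defensive.
Import GRing.Theory.
Local Open Scope ring_scope.

Section ExpMx.
Variable k : fieldType.

(* Two-variable polynomial ring k[T,T'] is {poly {poly k}}: the inner
   variable is T, the outer variable is T'. *)
Definition polyT (q : {poly k}) : {poly {poly k}} := q%:P.
Definition polyT' (q : {poly k}) : {poly {poly k}} := q^:P.
Definition polyTT' (q : {poly k}) : {poly {poly k}} :=
  (q^:P) \Po ('X + ('X)%:P).                                         (* q(T+T') *)

Definition is_exp_mx (n : nat) (A : 'M[{poly k}]_n) : Prop :=
  (map_mx polyT A *m map_mx polyT' A = map_mx polyTT' A) /\
  map_mx (fun q => q.[0]) A = 1%:M.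

Definition ExpP (p n : nat) (M : 'M[{poly k}]_n) : 'M[{poly k}]_n :=
  \sum_(i < p) ((i`!)%:R^-1 : k)%:P *: M ^+ i.

Definition in_Nr (p n r : nat) (N : 'I_r -> 'M[k]_n) : Prop :=
  (forall i, N i ^+ p = 0) /\ (forall i j, N i *m N j = N j *m N i).

(* pi(rho_{N_1..N_r}) = prod_{i=1}^r Exp(T^{p^{i-1}} N_i)  (0-indexed here) *)
Definition pi_mx (p n r : nat) (N : 'I_r -> 'M[k]_n) : 'M[{poly k}]_n :=
  \prod_(i < r) ExpP p ('X^(p ^ i) *: map_mx polyC (N i)).
End ExpMx.

(* Main.v *)
Require Import Defs.
From HB Require Import structures.
From mathcomp Require Import all_boot all_order all_algebra.
Set Implicit Arguments. Unset Strict Implicit.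
Import GRing.Theory.
Local Open Scope ring_scope.
Section Lucas.
Variable k : fieldType.
Variable p : nat.
Hypothesis hp : p \in [pchar k].

Lemma p_prime : prime p. Proof. exact: pcharf_prime hp. Qed.
Lemma p_gt1 : (1 < p)%N. Proof. exact: prime_gt1 p_prime. Qed.

Lemma binp_natr j : (0 < j < p)%N -> ('C(p, j)%:R : k) = 0.
Proof. by move=> hj; apply/eqP; rewrite -(dvdn_pcharf hp) prime_dvd_bin ?p_prime. Qed.

Lemma VP x i : ('C(p + x, i)%:R : k) =
  'C(x, i)%:R + (if (p <= i)%N then 'C(x, i - p)%:R else 0).
Proof.
rewrite -binomial.Vandermonde natr_sum big_ord_recl /= bin0 mul1n subn0.
congr (_ + _).
case: ifP => hpi.
  have hp1 : (p.-1 < i)%N by rewrite prednK ?(ltn_trans _ p_gt1).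
  rewrite (bigD1 (Ordinal hp1)) //= big1 ?addr0.
    by rewrite /bump leq0n /= add1n prednK ?(ltn_trans _ p_gt1) // binn mul1n.
  move=> j /eqP hj; rewrite natrM /bump leq0n /= add1n.
  case: (ltngtP j.+1 p) => hjp.
  - by rewrite binp_natr ?mul0r // hjp.
  - by rewrite bin_small // mul0r.
  - by exfalso; apply: hj; apply: val_inj => /=; rewrite -hjp.
rewrite big1 // => j _; rewrite natrM /bump leq0n /= add1n binp_natr ?mul0r //.
rewrite /=; apply: (leq_ltn_trans (ltn_ord j)); by rewrite ltnNge hpi.
Qed.

Lemma lucas m a b e : (a < p)%N -> (e < p)%N ->
  ('C(p * m + a, p * b + e)%:R : k) = ('C(m, b) * 'C(a, e))%:R.
Proof.
move=> ha he; elim: m b => [|m IH] b.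
  case: b => [|b]; first by rewrite !muln0 !add0n bin0 mul1n.
  rewrite muln0 add0n bin_small ?bin0n //.
  by apply: (leq_trans ha); rewrite (leq_trans _ (leq_addr _ _)) // leq_pmulr.
rewrite mulnS -addnA VP IH; case: b => [|b].
  by rewrite muln0 add0n leqNgt he /= addr0 !bin0.
rewrite ifT; last by rewrite mulnS -addnA leq_addr.
by rewrite mulnS -addnA addKn IH binS mulnDl natrD.
Qed.
End Lucas.
Section Coef.
Variable k : fieldType.

Lemma coefPhi (q : {poly k}) i j :
  ((q^:P \Po ('X + ('X)%:P))`_j)`_i = q`_(i + j)%N *+ 'C(i + j, j).
Proof.
elim/poly_ind: q i j => [|q c IH] i j.
  by rewrite rmorph0 raddf0 !coef0 mul0rn.
rewrite rmorphD rmorphM /= map_polyX map_polyC /=.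
rewrite rmorphD rmorphM /= comp_polyX comp_polyC.
set Y := _ \Po _.
rewrite mulrDr !coefD coefMX coefMC coefC.
case: j => [|j]; case: i => [|i] /=; rewrite ?coef0 ?add0r ?coefD ?coefMX ?coefC /=. 
all: rewrite ?add0r ?addr0 ?IH ?addn0 ?add0n ?bin0 ?binn ?mulr1n //.
rewrite !addSn !addnS -mulrnDr (binS (i + j).+1).
by congr (_ *+ _); apply: addnC.
Qed.

Definition cmx n (A : 'M[{poly k}]_n) j : 'M[k]_n := map_mx (fun q : {poly k} => q`_j) A.

Lemma exp_c0 n (A : 'M[{poly k}]_n) : is_exp_mx A -> cmx A 0 = 1.
Proof.
case=> _ H; apply/matrixP=> a b; have := congr1 (fun M : 'M[k]_n => M a b) H.
by rewrite !mxE horner_coef0.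
Qed.

Lemma exp_cM n (A : 'M[{poly k}]_n) : is_exp_mx A ->
  forall i j, cmx A i *m cmx A j = cmx A (i + j)%N *+ 'C(i + j, j).
Proof.
case=> H _ i j; apply/matrixP=> a b.
have := congr1 (fun M : 'M[{poly {poly k}}]_n => ((M a b)`_j)`_i) H; rewrite /= !mxE.
rewrite /polyTT' coefPhi -scaler_nat => E. rewrite !mxE mulr_natl -E.
rewrite !coef_sum; apply: eq_bigr => l _.
by rewrite !mxE /polyT /polyT' coefCM coef_map /= coefMC.
Qed.
End Coef.
Section Mx.
Variable k : fieldType.
Variable p : nat.
Variable n : nat.

Definition Cm (M : 'M[k]_n) : 'M[{poly k}]_n := map_mx (@polyC k) M.
Definition sig (M : 'M[{poly k}]_n) : 'M[{poly k}]_n := map_mx (comp_poly ('X^p)) M.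
Definition mkA (c : nat -> 'M[k]_n) d := \sum_(j < d) 'X^j *: Cm (c j).

Lemma CmM M1 M2 : Cm (M1 * M2) = Cm M1 * Cm M2.
Proof. by rewrite /Cm -!mulmxE map_mxM. Qed.
Lemma Cm1 : Cm 1 = 1.
Proof. by rewrite /Cm map_mx1. Qed.
Lemma Cm0 : Cm 0 = 0.
Proof. by rewrite /Cm map_mx0. Qed.
Lemma CmX M a : Cm (M ^+ a) = Cm M ^+ a.
Proof. by elim: a => [|a IH]; rewrite ?expr0 ?Cm1 // !exprS CmM IH. Qed.
Lemma CmZ s M : Cm (s *: M) = s%:P *: Cm M.
Proof. by rewrite /Cm map_mxZ. Qed.
Lemma termM i j M1 M2 :
  ('X^i *: Cm M1) * ('X^j *: Cm M2) = 'X^(i + j) *: Cm (M1 * M2).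
Proof. by rewrite -!mulmxE -scalemxAl -scalemxAr scalerA -exprD CmM. Qed.
Lemma exprZmx (s : {poly k}) (M : 'M[{poly k}]_n) a : (s *: M) ^+ a = s ^+ a *: M ^+ a.
Proof.
elim: a => [|a IH]; first by rewrite !expr0 scale1r.
by rewrite !exprS IH -!mulmxE -scalemxAl -scalemxAr scalerA.
Qed.

Lemma sigM M1 M2 : sig (M1 * M2) = sig M1 * sig M2.
Proof. by rewrite /sig -!mulmxE map_mxM. Qed.
Lemma sig1 : sig 1 = 1.
Proof. by rewrite /sig map_mx1. Qed.
Lemma sigD M1 M2 : sig (M1 + M2) = sig M1 + sig M2.
Proof. by rewrite /sig map_mxD. Qed.
Lemma sig0 : sig 0 = 0.
Proof. by rewrite /sig map_mx0. Qed.
Lemma sigX M a : sig (M ^+ a) = sig M ^+ a.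
Proof. by elim: a => [|a IH]; rewrite ?expr0 ?sig1 // !exprS sigM IH. Qed.
Lemma sigZ s M : sig (s *: M) = (s \Po 'X^p) *: sig M.
Proof. by rewrite /sig map_mxZ. Qed.
Lemma sig_sum I (r : seq I) (P : pred I) F :
  sig (\sum_(i <- r | P i) F i) = \sum_(i <- r | P i) sig (F i).
Proof. exact: (big_morph sig sigD sig0). Qed.
Lemma sig_prod I (r : seq I) (P : pred I) F :
  sig (\prod_(i <- r | P i) F i) = \prod_(i <- r | P i) sig (F i).
Proof. exact: (big_morph sig sigM sig1). Qed.
Lemma sigExp M : sig (ExpP p M) = ExpP p (sig M).
Proof.
rewrite /ExpP sig_sum; apply: eq_bigr => i _.
by rewrite sigZ comp_polyC sigX.
Qed.
Lemma sigCm M : sig (Cm M) = Cm M.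
Proof. by apply/matrixP => a b; rewrite !mxE comp_polyC. Qed.
Lemma sig_term m M : sig ('X^m *: Cm M) = 'X^(p * m) *: Cm M.
Proof. by rewrite sigZ sigCm rmorphXn /= comp_polyX exprM. Qed.

Lemma sum_extend (F : nat -> 'M[{poly k}]_n) d D :
  (forall j, (d <= j)%N -> F j = 0) -> (d <= D)%N ->
  \sum_(j < d) F j = \sum_(j < D) F j.
Proof.
move=> h hdD; rewrite -!(big_mkord xpredT) (big_cat_nat (leq0n d) hdD) /=.
rewrite [X in _ = _ + X]big1_seq ?addr0 // => j /andP[_].
by rewrite mem_index_iota => /andP[hj _]; apply: h.
Qed.

Lemma sum_reindex (F : nat -> 'M[{poly k}]_n) D :
  \sum_(j < p * D) F j = \sum_(a < p) \sum_(b < D) F (a + p * b)%N.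
Proof.
elim: D => [|D IH].
  by rewrite muln0 big_ord0 big1 // => a _; rewrite big_ord0.
rewrite mulnSr big_split_ord /= IH.
rewrite [RHS](eq_bigr (fun a : 'I_p => \sum_(b < D) F (a + p * b)%N + F (a + p * D)%N)).
  by rewrite big_split /=; congr (_ + _); apply: eq_bigr => a _; rewrite addnC.
by move=> a _; rewrite big_ord_recr.
Qed.
End Mx.

Section Main.
Variable k : fieldType.
Variable p : nat.
Hypothesis hp : p \in [pchar k].
Variable n : nat.

Lemma fact_neq0 a : (a < p)%N -> (a`!%:R : k) != 0.
Proof.
elim: a => [|a IH] ha; first by rewrite fact0 oner_neq0.
rewrite factS natrM mulf_neq0 ?IH ?(ltnW ha) //.
rewrite -(dvdn_pcharf hp); apply/negP => /(dvdn_leq (ltn0Sn a)).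
by rewrite leqNgt ha.
Qed.

Section C.
Variable c : nat -> 'M[k]_n.
Hypothesis c0 : c 0 = 1.
Hypothesis cM : forall i j, c i *m c j = c (i + j)%N *+ 'C(i + j, j).

Lemma ccomm i j : c i *m c j = c j *m c i.
Proof.
rewrite !cM addnC; congr (_ *+ _).
by rewrite -(bin_sub (leq_addr i j)) addKn.
Qed.

Lemma c1pow a : c 1 ^+ a = c a *+ a`!.
Proof.
elim: a => [|a IH]; first by rewrite expr0 c0 fact0 mulr1n.
by rewrite exprS IH mulrnAr -mulmxE cM add1n binSn -mulrnA factS.
Qed.

Lemma cpow_p : c 1 ^+ p = 0.
Proof.
rewrite c1pow -scaler_nat.
have -> : (p`!%:R : k) = 0.
  apply/eqP; rewrite -(dvdn_pcharf hp) dvdn_fact //.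
  by rewrite leqnn andbT prime_gt0 // (pcharf_prime hp).
by rewrite scale0r.
Qed.

Lemma ExpP_c1 : ExpP p ('X^(p ^ 0) *: Cm (c 1)) = \sum_(a < p) 'X^a *: Cm (c a).
Proof.
rewrite /ExpP; apply: eq_bigr => a _.
rewrite expn0 expr1 exprZmx -CmX c1pow -scaler_nat CmZ !scalerA.
congr (_ *: _).
by rewrite mulrAC -polyCM mulVf ?fact_neq0 // mul1r.
Qed.

Lemma cc a b : (a < p)%N -> c a * c (p * b)%N = c (a + p * b)%N.
Proof.
move=> ha; have := cM a (p * b); rewrite mulmxE => ->.
have e : ('C(a + p * b, p * b)%:R : k) = 1.
  rewrite addnC -[X in 'C(_, X)]addn0 (lucas hp) ?binn ?bin0 // (ltnW (p_gt1 hp)) //.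
rewrite -scaler_nat e scale1r //.
Qed.
End C.

Lemma main_ind D : forall d (c : nat -> 'M[k]_n), (d <= D)%N -> (0 < d)%N ->
  c 0 = 1 -> (forall i j, c i *m c j = c (i + j)%N *+ 'C(i + j, j)) ->
  (forall j, (d <= j)%N -> c j = 0) ->
  exists r (N : 'I_r -> 'M[k]_n),
    in_Nr p N /\ (forall i, exists j, N i = c j) /\ mkA c d = pi_mx p N.
Proof.
elim: D => [|D IH] d c hdD hd0 c0 cM cz.
  by move: hd0; rewrite ltnNge hdD.
case: (leqP d 1) => hd1.
  have -> : d = 1%N by apply/eqP; rewrite eqn_leq hd1 hd0.
  exists 0%N, (fun _ => 0); split; first by split; case.
  split; first by case.
  by rewrite /pi_mx big_ord0 /mkA big_ord1 expr0 c0 Cm1 scale1r.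
have pgt1 := p_gt1 hp.
set d' := (d.-1 %/ p).+1.
have hdd' : (d <= p * d')%N.
  by rewrite mulnC /d' -{1}(prednK hd0); apply: ltn_ceil; rewrite ltnW.
have hd'd : (d' < d)%N.
  rewrite /d' -[X in (_ < X)%N](prednK hd0) ltnS ltn_Pdiv //.
  by rewrite -ltnS prednK.
have [r' [N' [hN' [hNc' hA']]]] : exists r (N : 'I_r -> 'M[k]_n),
    in_Nr p N /\ (forall i, exists j, N i = c (p * j)%N) /\
    mkA (fun b => c (p * b)%N) d' = pi_mx p N.
  apply: (IH d' (fun b => c (p * b)%N)).
  - by rewrite -ltnS (leq_trans hd'd).
  - by [].
  - by rewrite muln0.
  - move=> i j; rewrite cM -mulnDr -!scaler_nat; congr (_ *: _).
    have := @lucas _ _ hp (i + j) 0 j 0 (prime_gt0 (pcharf_prime hp)) (prime_gt0 (pcharf_prime hp)).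
    by rewrite !addn0 bin0 muln1.
  - move=> j hj; apply: cz; apply: (leq_trans hdd'); by rewrite leq_mul2l hj orbT.
pose N := fun i : 'I_r'.+1 => oapp N' (c 1) (unlift ord0 i).
have hNc : forall i, exists j, N i = c j.
  move=> i; rewrite /N; case: (unliftP ord0 i) => [j _|_] /=; last by exists 1%N.
  by have [a ->] := hNc' j; exists (p * a)%N.
exists r'.+1, N; split; last split => //.
  split => [i|i j]; last first.
    by have [a ->] := hNc i; have [b ->] := hNc j; apply: ccomm.
  rewrite /N; case: (unliftP ord0 i) => [j _|_] /=; last exact: cpow_p.
  by case: hN'.
rewrite /pi_mx big_ord_recl /N unlift_none /=.
rewrite (eq_bigr (fun i : 'I_r' => sig p (ExpP p ('X^(p ^ i) *: Cm (N' i))))); last first.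
  by move=> i _; rewrite liftK /= sigExp sig_term /bump /= add1n expnS.
rewrite -sig_prod -/(pi_mx p N') -hA' /mkA sig_sum.
rewrite (eq_bigr (fun b : 'I_d' => 'X^(p * b) *: Cm (c (p * b)%N))); last first.
  by move=> b _; rewrite sig_term.
change (map_mx (@polyC k) (c 1)) with (Cm (c 1)).
rewrite ExpP_c1 // mulr_suml.
rewrite (sum_extend (F := fun j => 'X^j *: Cm (c j)) (D := p * d') _ hdd'); last first.
  by move=> j hj; rewrite cz // Cm0 scaler0.
rewrite (sum_reindex p (fun j => 'X^j *: Cm (c j))); apply: eq_bigr => a _; rewrite mulr_sumr.
by apply: eq_bigr => b _; rewrite termM cc.
Qed.
End Main.

Lemma A_mkA (k : fieldType) n (A : 'M[{poly k}]_n) d :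
  (forall a b, (size (A a b) <= d)%N) -> A = mkA (cmx A) d.
Proof.
move=> hs; apply/matrixP => a b; rewrite /mkA summxE.
apply/polyP => i; rewrite coef_sum.
under eq_bigr do rewrite !mxE mulrC coefCM coefXn.
case: (ltnP i d) => hi.
  rewrite (bigD1 (Ordinal hi)) //= eqxx mulr1 big1 ?addr0 // => j hj.
  rewrite (_ : (i == j) = false) ?mulr0 //; apply/negbTE.
  by apply: contra hj => /eqP h; apply/eqP/val_inj; rewrite /= h.
rewrite nth_default ?(leq_trans (hs a b)) // big1 // => j _.
by rewrite (_ : (i == j) = false) ?mulr0 //; apply/negbTE; rewrite neq_ltn (leq_trans (ltn_ord j)) ?orbT.
Qed.

Unset Implicit Arguments.
Set Strict Implicit.

Theorem lemma2p2 (k : closedFieldType) (p : nat) (hp : p \in [pchar k])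
  (n : nat) (hn : (0 < n)%N) (A : 'M[{poly k}]_n) :
  is_exp_mx A ->
  exists r : nat, exists N : 'I_r -> 'M[k]_n, in_Nr p N /\ A = pi_mx p N.
Proof.
move=> hA.
pose d := (\max_(ab : 'I_n * 'I_n) size (A ab.1 ab.2)).+1.
have hs : forall a b, (size (A a b) < d)%N.
  by move=> a b; rewrite ltnS (leq_bigmax (a, b) (F := fun ab => size (A ab.1 ab.2))).
have cz : forall j, (d <= j)%N -> cmx A j = 0.
  move=> j hj; apply/matrixP => a b; rewrite !mxE nth_default //.
  exact: ltnW (leq_trans (hs a b) hj).
have [r [N [hN [_ hAN]]]] := main_ind hp (leqnn d) (ltn0Sn _) (exp_c0 hA) (exp_cM hA) cz.
exists r, N; split => //; rewrite -hAN; apply: A_mkA => a b.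
exact: ltnW (hs a b).
Qed.
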